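(* Let $D$ be a knot diagram, let $2\le k\le\infty$, and let $M$ be the game matrix of some version of the $k$-color region select game on $D$. If $\boldsymbol\ell$ is a null pattern of $M$ with $\boldsymbol\ell(r_1)=\boldsymbol\ell(r_2)=0$ for two adjacent regions $r_1,r_2$ of $D$, then $\boldsymbol\ell=\mathbf 0$.
   Context: Diagrams: a link (knot) diagram $D$ is the underlying graph of a regular projection of a link (knot) into $S^2$. Its vertices are the crossings, each of valence 4, and over/under information is ignored. Components without crossings are closed loops, each regarded as one edge with no vertices. Regions of $D$ are the connected components of $S^2\setminus D$. A vertex or edge is incident to a region if it lies in the boundary of that region. Two regions are adjacent if they are incident to a common edge. A vertex $v$ is reducible if some circle in $S^2$ meets $D$ transversely only at $v$, and irreducible otherwise. An irreducible vertex is incident to four distinct regions. A reducible vertex $v$ is incident to exactly three regions $r_0,r_1,r_2$, where $r_0$ touches $v$ from two sides and $r_1,r_2$ touch it from one side. A knot diagram with $n$ vertices has $n+2$ regions. A knot diagram is reduced if all its vertices are irreducible. Ring: for an integer $k\ge2$ let $\mathbb{Z}_k=\mathbb{Z}/k\mathbb{Z}$, and for $k=\infty$ let $\mathbb{Z}_\infty=\mathbb{Z}$. Game versions: a version of the $k$-color region select game on $D$ is a choice of an increment number $a(v,r)\in\mathbb{Z}_k$ for every incident vertex–region pair, subject to the following rules. - If $k<\infty$ and $v$ is irreducible, then $a(v,r)=a_v$ is the same for all regions $r$ incident to $v$, and $a_v$ is not a zero divisor of $\mathbb{Z}_k$. - If $k<\infty$ and $v$ is reducible, then $a(v,r_0)$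 is arbitrary, while $a(v,r_1)$ and $a(v,r_2)$ are not zero divisors. - If $k=\infty$, then $a(v,r)=1$, except that $a(v,r_0)\in\mathbb{Z}$ is arbitrary when $v$ is reducible. - The original game is the version in which all increment numbers equal $1$. Game matrix: enumerate the vertices as $v_1,\dots,v_n$ and the regions as $r_1,\dots,r_m$. The game matrix is the $n\times m$ matrix $M$ over $\mathbb{Z}_k$ with $M_{ij}=a(v_i,r_j)$ if $v_i$ is incident to $r_j$, and $M_{ij}=0$ otherwise. Patterns and configurations: a push pattern is a vector $\mathbf p\in\mathbb{Z}_k^m$, and $\mathbf p(r_j)=p_j$ is the number of times $r_j$ is pushed. A region $r$ is not pushed in $\mathbf p$ if $\mathbf p(r)=0$. A color configuration is a vector $\mathbf c\in\mathbb{Z}_k^n$. Applying $\mathbf p$ to $\mathbf c$ yields $\mathbf c+M\mathbf p$. The configuration $\mathbf c$ is solvable if some $\mathbf p$ satisfies $M\mathbf p=-\mathbf c$; such a $\mathbf p$ is a solving pattern for $\mathbf c$. $D$ is always solvable in the version if every $\mathbf c\in\mathbb{Z}_k^n$ is solvable. A null pattern is an element of $Ker_k(M)=\{\mathbf p\in\mathbb{Z}_k^m: M\mathbf p=0\}$. *)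

(* Defs.v *)
(* Combinatorial model of a knot diagram as a 4-regular
   combinatorial map (rotation system) on the sphere. *)
From HB Require Import structures.
From mathcomp Require Import all_boot all_order all_algebra all_fingroup.
Set Implicit Arguments. Unset Strict Implicit. Unset Printing Implicit Defensive.
Import Order.TTheory GRing.Theory Num.Theory.
Local Open Scope ring_scope.

Inductive kcol := Kfin of nat | Kinf.

Definition Zk (k : kcol) : comUnitRingType :=
  match k with Kfin n => 'Z_n | Kinf => int end.

Definition valid_k (k : kcol) : Prop :=
  match k with Kfin n => (2 <= n)%N | Kinf => True end.

(* Raw diagram data: darts (half-edges at crossings), the rotation sigma
   around each vertex, the involution alpha pairing the two ends of an edge,
   and the labelling of darts by vertices (sigma-orbits) and by regions
   (orbits of the face permutation phi = alpha \o sigma; dart h stands for the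
   corner between h and sigma h). *)
Record diagram := Diagram {
  dart : finType;
  vtx : finType;
  reg : finType;
  sigma : {perm dart};
  alpha : {perm dart};
  vof : dart -> vtx;
  rof : dart -> reg
}.

Section Diag.
Variable D : diagram.

Definition phi (h : dart D) : dart D := alpha D (sigma D h).
(* straight-ahead continuation of the curve through a crossing *)
Definition tau (h : dart D) : dart D := sigma D (sigma D (alpha D h)).

Definition knot_diagram : Prop :=
  (forall h, alpha D (alpha D h) = h /\ alpha D h != h) /\
  (forall h, iter 4 (sigma D) h = h /\ sigma D h != h /\ iter 2 (sigma D) h != h) /\
  (forall h h', vof h = vof h' <-> fconnect (sigma D) h h') /\
  (forall v : vtx D, exists h, vof h = v) /\
  (forall h h', rof h = rof h' <-> fconnect phi h h') /\
  (forall r : reg D, exists h, rof h = r) /\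
  (* one component: the straight-ahead walk from h0 traverses every edge *)
  (exists h0, forall h, fconnect tau h0 h \/ fconnect tau h0 (alpha D h)) /\
  (* Euler formula V - E + F = 2 (the map lies on the sphere) *)
  (#|vtx D| + #|reg D| = #|dart D| %/ 2 + 2)%N.

Definition incident (v : vtx D) (r : reg D) : bool :=
  [exists h, (vof h == v) && (rof h == r)].

Definition ncorners (v : vtx D) (r : reg D) : nat :=
  #|[set h | (vof h == v) && (rof h == r)]|.

Definition irreducible (v : vtx D) : Prop :=
  forall h h', vof h = v -> vof h' = v -> rof h = rof h' -> h = h'.

Definition adjacent (r1 r2 : reg D) : Prop :=
  exists h, rof h = r1 /\ rof (alpha D h) = r2.

Definition not_zero_divisor (R : comUnitRingType) (x : R) : Prop :=
  forall y : R, x * y = 0 -> y = 0.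

Definition is_version (k : kcol) (a : vtx D -> reg D -> Zk k) : Prop :=
  match k return (vtx D -> reg D -> Zk k) -> Prop with
  | Kfin n => fun a =>
      forall v,
        (irreducible v ->
           exists av : Zk (Kfin n), not_zero_divisor av /\
             forall r, incident v r -> a v r = av) /\
        (~ irreducible v ->
           forall r, incident v r -> ncorners v r = 1%N ->
             not_zero_divisor (a v r))
  | Kinf => fun a =>
      forall v r, incident v r -> (irreducible v \/ ncorners v r = 1%N) ->
        a v r = 1
  end a.

Definition game_matrix (k : kcol) (a : vtx D -> reg D -> Zk k)
  (v : vtx D) (r : reg D) : Zk k :=
  if incident v r then a v r else 0.

Definition null_pattern (k : kcol) (a : vtx D -> reg D -> Zk k)
  (l : reg D -> Zk k) : Prop :=
  forall v, \sum_(r : reg D) game_matrix a v r * l r = 0.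

End Diag.

(* Main.v *)
Require Import Defs.
From mathcomp Require Import all_boot all_order all_algebra all_fingroup.
From mathcomp Require Import zify ring.
Set Implicit Arguments. Unset Strict Implicit. Unset Printing Implicit Defensive.
Import GRing.Theory.
Local Open Scope ring_scope.

Definition Rel (T : finType) (s a : T -> T) : rel T :=
  [rel u w | (w == s u) || (u == s w) || (w == a u)].

Lemma F2_dbl (w : 'F_2) : w + w = 0.
Proof. by rewrite -mulr2n -mulr_natr (_ : 2%:R = 0) ?mulr0 //; apply/val_inj. Qed.

Lemma F2_eq (u v : 'F_2) : u + v = 0 -> u = v.
Proof.
move/eqP; rewrite addr_eq0 => /eqP ->.
by apply/eqP; rewrite eq_sym -addr_eq0 F2_dbl.
Qed.

Lemma porbits_mem (T : finType) (q : {perm T}) x : porbit q x \in porbits q.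
Proof. exact: imset_f. Qed.

Section Incmx.
Variables (T : finType) (m n : nat) (l1 : T -> 'I_m) (l2 : T -> 'I_n).
Definition incmx : 'M['F_2]_(m, n) :=
  \matrix_(i, j) \sum_(x | (l1 x == i) && (l2 x == j)) 1.

Lemma incmx_sumL (G : 'I_m -> 'F_2) j :
  \sum_i G i * incmx i j = \sum_(x | l2 x == j) G (l1 x).
Proof.
rewrite (eq_bigr (fun i => \sum_x (if (l1 x == i) && (l2 x == j) then G i else 0))); last first.
  move=> i _; rewrite mxE mulr_sumr big_mkcond /=; apply eq_bigr => x _.
  by case: ifP => _; rewrite ?mulr1 ?mulr0.
rewrite exchange_big /= [RHS]big_mkcond /=; apply eq_bigr => x _.
rewrite (bigD1 (l1 x)) //= eqxx /= big1 ?addr0; first by case: ifP.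
by move=> i /negbTE Hi; rewrite eq_sym Hi.
Qed.

Lemma incmx_sumR (G : 'I_n -> 'F_2) i :
  \sum_j incmx i j * G j = \sum_(x | l1 x == i) G (l2 x).
Proof.
rewrite (eq_bigr (fun j => \sum_x (if (l1 x == i) && (l2 x == j) then G j else 0))); last first.
  move=> j _; rewrite mxE mulr_suml big_mkcond /=; apply eq_bigr => x _.
  by case: ifP => _; rewrite ?mul1r ?mul0r.
rewrite exchange_big /= [RHS]big_mkcond /=; apply eq_bigr => x _.
rewrite (bigD1 (l2 x)) //= eqxx /= big1 ?addr0; first by rewrite andbT; case: ifP.
by move=> j /negbTE Hj; rewrite [l2 x == j]eq_sym Hj andbF.
Qed.
End Incmx.

Lemma incmx_tr (T : finType) m n (l1 : T -> 'I_m) (l2 : T -> 'I_n) :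
  (incmx l1 l2)^T = incmx l2 l1.
Proof. by apply/matrixP => i j; rewrite !mxE; apply eq_bigl => x; rewrite andbC. Qed.

Lemma porbits_part (T : finType) (a : {perm T}) : partition (porbits a) [set: T].
Proof.
have H : [acts <[a]>%g, on [set: T] | 'P] by apply/actsP => x _ y; rewrite !inE.
have := orbit_partition H.
congr partition; apply/setP => A; apply/imsetP/imsetP => [[x _ ->]|[x _ ->]]; exists x => //.
by rewrite porbit.unlock.
by rewrite porbit.unlock.
Qed.

Section Genus.
Variables (T : finType) (s a : {perm T}) (x0 : T).
Hypothesis ainv : forall x, a (a x) = x.
Hypothesis afix : forall x, a x != x.
Hypothesis conn : forall x y, connect (Rel s a) x y.

Definition p : {perm T} := (s * a)%g.
Lemma pE x : p x = a (s x). Proof. by rewrite permM. Qed.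

Definition oidx (q : {perm T}) (x : T) : 'I_#|porbits q| :=
  enum_rank_in (porbits_mem q x) (porbit q x).

Lemma oidxK q x : enum_val (oidx q x) = porbit q x.
Proof. by rewrite /oidx enum_rankK_in // porbits_mem. Qed.

Lemma oidx_eq q x y : (oidx q x == oidx q y) = (y \in porbit q x).
Proof.
apply/eqP/idP => [H|H].
  by rewrite -eq_porbit_mem -!oidxK H.
by apply: enum_val_inj; rewrite !oidxK; apply/eqP; rewrite eq_sym eq_porbit_mem.
Qed.

Lemma oidx_surj q (i : 'I_#|porbits q|) : exists x, oidx q x = i.
Proof.
have /imsetP[x _ Hx] := enum_valP i.
by exists x; apply: enum_val_inj; rewrite oidxK Hx.
Qed.

Lemma oidx_perm q x : oidx q (q x) = oidx q x.
Proof. by apply: enum_val_inj; rewrite !oidxK -(porbit_perm q 1 x) expg1. Qed.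

Lemma porbit_inv x y : (y \in porbit a x) = (y == x) || (y == a x).
Proof.
apply/porbitP/orP => [[i ->]|[/eqP->|/eqP->]]; last 2 first.
- by exists 0%N; rewrite expg0 perm1.
- by exists 1%N; rewrite expg1.
elim: i => [|i [IH|IH]]; first by left; rewrite expg0 perm1.
  by right; rewrite expgSr permM (eqP IH).
by left; rewrite expgSr permM (eqP IH) ainv.
Qed.

Lemma pair_sum (H : T -> 'F_2) x :
  \sum_(y | oidx a y == oidx a x) H y = H x + H (a x).
Proof.
rewrite (bigD1 x) ?eqxx //= (big_pred1 (a x)) // => y /=.
rewrite eq_sym oidx_eq porbit_inv.
case: (y =P x) => [->|_] /=; first by rewrite eq_sym (negbTE (afix x)).
by rewrite andbT.
Qed.

Lemma const_on (f : T -> 'F_2) :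
  (forall x, f (s x) = f x) -> (forall x, f (a x) = f x) -> forall x y, f x = f y.
Proof.
move=> Hs Ha x y; have /connectP[pth Hp ->] := conn x y.
elim: pth x Hp => [|z pth IH] x //= /andP[Hxz Hp].
rewrite -(IH z Hp).
by move: Hxz => /orP[/orP[/eqP->|/eqP->]|/eqP->]; rewrite ?Hs ?Ha.
Qed.

Lemma card_edges : #|T| = (2 * #|porbits a|)%N.
Proof.
rewrite -cardsT (card_partition (porbits_part a)).
rewrite (eq_bigr (fun _ => 2%N)); first by rewrite sum_nat_const mulnC.
move=> A /imsetP[x _ ->].
have -> : porbit a x = [set x; a x].
  by apply/setP => y; rewrite porbit_inv !inE.
by rewrite cards2 eq_sym (afix x).
Qed.

Let vi := oidx s.
Let ei := oidx a.
Let fi := oidx p.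
Let Q := incmx ei vi.
Let P := incmx fi ei.

Lemma PQ0 : P *m Q = 0.
Proof.
apply/matrixP => f v; rewrite !mxE (incmx_sumR fi ei (fun e => Q e v) f).
pose b y : 'F_2 := if vi y == v then 1 else 0.
rewrite (eq_bigr (fun x => b x + b (a x))); last first.
  move=> x _; rewrite mxE big_mkcondr /= -(pair_sum b x).
  by apply: eq_bigr => y _; rewrite /b.
rewrite big_split /= [X in _ + X](reindex_inj (@perm_inj _ p)) /=.
rewrite [X in _ + X](eq_bigl (fun x => fi x == f)); last first.
  by move=> z; rewrite /fi oidx_perm.
rewrite [X in _ + X](eq_bigr b) ?F2_dbl // => z _.
by rewrite pE ainv /b /vi oidx_perm.
Qed.

Lemma ker_const m (l1 : T -> 'I_m) (u : 'rV['F_2]_m) :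
  (forall j, exists x, l1 x = j) ->
  (forall x, u 0 (l1 (s x)) = u 0 (l1 x)) -> (forall x, u 0 (l1 (a x)) = u 0 (l1 x)) ->
  (u <= (const_mx 1 : 'rV['F_2]_m))%MS.
Proof.
move=> Hsurj Hs Ha; have Hc := const_on Hs Ha.
apply/sub_rVP; exists (u 0 (l1 x0)); apply/rowP => j; rewrite !mxE mulr1.
have [y <-] := Hsurj j; by rewrite (Hc y x0).
Qed.

Lemma kerP_row (u : 'rV['F_2]_#|porbits p|) : u *m P = 0 ->
  (u <= (const_mx 1 : 'rV['F_2]_#|porbits p|))%MS.
Proof.
move=> Hu.
have Ha x : u 0 (fi (a x)) = u 0 (fi x).
  have := congr1 (fun M : 'rV_ _ => M 0 (ei x)) Hu.
  rewrite !mxE /P (incmx_sumL fi ei (fun f => u 0 f)) pair_sum.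
  by move/F2_eq => ->.
have Hs x : u 0 (fi (s x)) = u 0 (fi x).
  have -> : s x = a (p x) by rewrite pE ainv.
  by rewrite Ha /fi oidx_perm.
exact: ker_const (@oidx_surj p) Hs Ha.
Qed.

Lemma kerP : (kermx P <= (const_mx 1 : 'rV['F_2]_#|porbits p|))%MS.
Proof.
apply/row_subP => i; apply: kerP_row.
by rewrite -row_mul mulmx_ker row0.
Qed.

Lemma kerQt_row (u : 'rV['F_2]_#|porbits s|) : u *m Q^T = 0 ->
  (u <= (const_mx 1 : 'rV['F_2]_#|porbits s|))%MS.
Proof.
move=> Hu.
have Ha x : u 0 (vi (a x)) = u 0 (vi x).
  have := congr1 (fun M : 'rV_ _ => M 0 (ei x)) Hu.
  rewrite !mxE /Q incmx_tr (incmx_sumL vi ei (fun f => u 0 f)) pair_sum.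
  by move/F2_eq => ->.
have Hs x : u 0 (vi (s x)) = u 0 (vi x) by rewrite /vi oidx_perm.
exact: ker_const (@oidx_surj s) Hs Ha.
Qed.

Lemma kerQt : (kermx Q^T <= (const_mx 1 : 'rV['F_2]_#|porbits s|))%MS.
Proof.
apply/row_subP => i; apply: kerQt_row.
by rewrite -row_mul mulmx_ker row0.
Qed.

Lemma genus_ineq : (#|porbits s| + #|porbits p| <= #|porbits a| + 2)%N.
Proof.
have h1 : (\rank P <= #|porbits a| - \rank Q)%N.
  by rewrite -mxrank_ker; apply: mxrankS; rewrite sub_kermx PQ0.
have h2 : (#|porbits p| - \rank P <= 1)%N.
  by rewrite -mxrank_ker; apply: leq_trans (mxrankS kerP) _; exact: rank_leq_row.
have h3 : (#|porbits s| - \rank Q <= 1)%N.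
  by rewrite -mxrank_tr -mxrank_ker; apply: leq_trans (mxrankS kerQt) _; exact: rank_leq_row.
have h4 : (\rank Q <= #|porbits a|)%N by exact: rank_leq_row.
lia.
Qed.
End Genus.

Local Close Scope ring_scope.

Lemma Rel_sym (T : finType) (s a : T -> T) : (forall x, a (a x) = x) -> symmetric (Rel s a).
Proof.
move=> ainv x y; rewrite /Rel /= [(y == s x) || _]orbC.
congr (_ || _); apply/eqP/eqP => [->|->]; by rewrite ainv.
Qed.

Lemma even_inv (T : finType) (f : T -> T) (S : {set T}) :
  (forall x, f (f x) = x) -> (forall x, x \in S -> f x \in S) ->
  (forall x, x \in S -> f x != x) -> ~~ odd #|S|.
Proof.
move=> finv; have [n] := ubnP #|S|; elim: n S => // n IH S Hs Hf Hfix.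
case: (set_0Vmem S) => [->|[x xS]]; first by rewrite cards0.
have fxS : f x \in S :\ x by rewrite !inE Hfix // Hf.
have E : #|S| = (#|S :\ x :\ f x| + 2)%N.
  by rewrite (cardsD1 x S) xS (cardsD1 (f x) (S :\ x)) fxS; lia.
have Hs' : #|S :\ x :\ f x| < n by move: Hs; rewrite E; lia.
rewrite E oddD /= addbF.
apply: IH => // z; rewrite !inE => /and3P[z1 z2 zS].
  rewrite Hf // andbT; apply/andP; split.
    by apply: contra z2 => /eqP E'; apply/eqP; rewrite -(finv z) E' finv.
  by apply: contra z1 => /eqP E'; apply/eqP; rewrite -E' finv.
by apply: Hfix.
Qed.

Lemma fconnect_porbit (T : finType) (q : {perm T}) x y : fconnect q x y = (y \in porbit q x).
Proof.
apply/idP/porbitP => [H|[i ->]].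
  by exists (findex q x y); rewrite permX iter_findex.
by rewrite permX fconnect_iter.
Qed.

Lemma card_lab (T L : finType) (q : {perm T}) (lab : T -> L) :
  (forall x y, lab x = lab y <-> fconnect q x y) -> (forall l, exists x, lab x = l) ->
  #|L| = #|porbits q|.
Proof.
move=> Hlab Hsurj.
have -> : porbits q = [set [set x | lab x == l] | l : L].
  apply/setP => A; apply/imsetP/imsetP => [[y _ ->]|[l _ ->]].
    exists (lab y) => //; apply/setP => x; rewrite inE -fconnect_porbit.
    by apply/idP/eqP => H; [symmetry; apply/Hlab | apply/Hlab; symmetry].
  have [y Hy] := Hsurj l; exists y => //; apply/setP => x; rewrite inE -fconnect_porbit -Hy.
  by apply/eqP/idP => H; [apply/Hlab; symmetry | symmetry; apply/Hlab].
rewrite card_imset ?cardsT // => l l' E.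
have [x Hx] := Hsurj l.
have : x \in [set x | lab x == l] by rewrite inE Hx.
by rewrite E inE Hx => /eqP.
Qed.

Section Knot.
Variable D : diagram.
Hypothesis KD : knot_diagram D.

Local Notation s := (sigma D).
Local Notation a := (alpha D).
Local Notation vof := (@vof D).
Local Notation rof := (@rof D).

Lemma ainv h : a (a h) = h. Proof. by case: KD => H _; case: (H h). Qed.
Lemma afix h : a h != h. Proof. by case: KD => H _; case: (H h). Qed.
Lemma s4 h : s (s (s (s h))) = h. Proof. by case: KD => _ [H _]; case: (H h). Qed.
Lemma s1 h : s h != h. Proof. by case: KD => _ [H _]; case: (H h) => _ []. Qed.
Lemma s2 h : s (s h) != h. Proof. by case: KD => _ [H _]; case: (H h) => _ []. Qed.
Lemma vofP h h' : vof h = vof h' <-> fconnect s h h'.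
Proof. by case: KD => _ [_ [H _]]. Qed.
Lemma vsurj v : exists h, vof h = v. Proof. by case: KD => _ [_ [_ [H _]]]. Qed.
Lemma rofP h h' : rof h = rof h' <-> fconnect (phi (D:=D)) h h'.
Proof. by case: KD => _ [_ [_ [_ [H _]]]]. Qed.
Lemma rsurj r : exists h, rof h = r. Proof. by case: KD => _ [_ [_ [_ [_ [H _]]]]]. Qed.
Lemma tau_cov : exists h0, forall h, fconnect (tau (D:=D)) h0 h \/ fconnect (tau (D:=D)) h0 (a h).
Proof. by case: KD => _ [_ [_ [_ [_ [_ [H _]]]]]]. Qed.
Lemma euler : (#|vtx D| + #|reg D| = #|dart D| %/ 2 + 2)%N.
Proof. by case: KD => _ [_ [_ [_ [_ [_ [_ H]]]]]]. Qed.

Lemma s3 h : s (s (s h)) != h.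
Proof. by apply/eqP => E; move: (s1 h); rewrite -{1}E s4 eqxx. Qed.
Lemma s_inj : injective s. Proof. exact: perm_inj. Qed.

Lemma vof_s h : vof (s h) = vof h.
Proof. by symmetry; apply/vofP; apply: fconnect1. Qed.
Lemma rof_phi h : rof (phi h) = rof h.
Proof. by symmetry; apply/rofP; apply: fconnect1. Qed.
Lemma rof_a h : rof (a h) = rof (s (s (s h))).
Proof. by rewrite -(rof_phi (s (s (s h)))) /phi s4. Qed.

Lemma iter_s4 n h : iter n s h = iter (n %% 4) s h.
Proof.
rewrite {1}(divn_eq n 4) iterD; elim: (n %/ 4) => // k IH.
by rewrite mulSn iterD IH /= s4.
Qed.

Lemma darts_at g w : vof w = vof g -> [\/ w = g, w = s g, w = s (s g) | w = s (s (s g))].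
Proof.
move=> /esym/vofP/iter_findex <-; rewrite iter_s4.
have : (findex s g w %% 4 < 4)%N by rewrite ltn_mod.
case: (findex s g w %% 4)%N => [|[|[|[|//]]]] _ /=; by constructor.
Qed.

Lemma connR x y : connect (Rel s a) x y.
Proof.
have symR := sym_connect_sym (@Rel_sym _ s a ainv).
have [h0 Hcov] := tau_cov.
suff H : forall h, connect (Rel s a) h0 h.
  by apply: (connect_trans _ (H y)); rewrite symR; apply: H.
have Ht : forall n, connect (Rel s a) h0 (iter n (tau (D:=D)) h0).
  elim=> // n IH; apply: connect_trans IH _.
  set z := iter n _ h0.
  apply: (@connect_trans _ _ (a z)); first by apply: connect1; rewrite /Rel /= eqxx !orbT.
  apply: (@connect_trans _ _ (s (a z))); first by apply: connect1; rewrite /Rel /= eqxx.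
  by apply: connect1; rewrite /Rel /= /tau eqxx.
move=> h; case: (Hcov h) => [/iter_findex <-|/iter_findex E]; first exact: Ht.
have := Ht (findex (tau (D:=D)) h0 (a h)); rewrite E => H1; apply: connect_trans H1 _.
by apply: connect1; rewrite /Rel /= ainv eqxx !orbT.
Qed.

Definition phiP : {perm dart D} := (s * a)%g.
Lemma phiPE h : phiP h = phi h. Proof. by rewrite permM. Qed.

Lemma euler_porbits : (#|porbits s| + #|porbits phiP| = #|porbits a| + 2)%N.
Proof.
have Hv : #|vtx D| = #|porbits s| by apply: card_lab; [exact: vofP | exact: vsurj].
have Hr : #|reg D| = #|porbits phiP|.
  apply: card_lab; last exact: rsurj.
  by move=> x y; rewrite (eq_fconnect (f' := phi (D:=D)) phiPE); exact: rofP.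
have He := card_edges (fun h => ainv h) (fun h => afix h).
by rewrite -Hv -Hr euler He mulKn.
Qed.

Definition scut x y : {perm dart D} := (tperm x y * s)%g.
Lemma scutE x y z : z != x -> z != y -> scut x y z = s z.
Proof. by move=> zx zy; rewrite permM tpermD // eq_sym. Qed.
Lemma scutx x y : scut x y x = s y. Proof. by rewrite permM tpermL. Qed.
Lemma scuty x y : scut x y y = s x. Proof. by rewrite permM tpermR. Qed.

Lemma cut_disc x y : vof x = vof y -> x != y -> rof x = rof y ->
  ~ (forall u w, connect (Rel (scut x y) a) u w).
Proof.
move=> Hv Hxy Hr Hc.
have Hg := genus_ineq x (fun h => ainv h) (fun h => afix h) Hc.
have Hs := porbits_mul_tperm s x y.
have Hf := porbits_mul_tperm phiP x y.
have xs : x \in porbit s y by rewrite -fconnect_porbit; apply/vofP.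
have xf : x \in porbit phiP y.
  by rewrite -fconnect_porbit (eq_fconnect (f' := phi (D:=D)) phiPE); apply/rofP.
rewrite xs Hxy /= in Hs; rewrite xf Hxy /= in Hf.
have E : p (scut x y) a = (tperm x y * phiP)%g by rewrite /p /scut /phiP mulgA.
rewrite E in Hg.
have := euler_porbits. rewrite /scut in Hg. rewrite double0 addn0 in Hs. rewrite double0 addn0 in Hf. rewrite Hs Hf in Hg. move=> He; move: Hg; rewrite addnACA He. lia.
Qed.

Lemma reach_v x y (Hxy : vof x = vof y) z :
  exists2 w, vof w = vof x & connect (Rel (scut x y) a) z w.
Proof.
have /connectP[pth Hp Hl] := connR z x.
elim: pth z Hp Hl => [|z1 pth IH] z /=.
  by move=> _ ->; exists z.
move=> /andP[Hz Hp] Hl.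
case: (vof z =P vof x) => [Hzx|Hzx]; first by exists z.
have [w Hw Hc] := IH z1 Hp Hl.
exists w => //; apply: connect_trans Hc; apply: connect1.
have zx : z != x by apply/eqP => E; apply: Hzx; rewrite E.
have zy : z != y by apply/eqP => E; apply: Hzx; rewrite E.
rewrite /Rel /=; move: Hz; rewrite /Rel /= => /orP[/orP[/eqP->|/eqP E]|->]; last by rewrite !orbT.
  by rewrite (scutE zx zy) eqxx.
have z1x : z1 != x by apply/eqP => E1; apply: Hzx; rewrite E E1 vof_s.
have z1y : z1 != y by apply/eqP => E1; apply: Hzx; rewrite E E1 vof_s.
by rewrite (scutE z1x z1y) -E eqxx orbT.
Qed.

Lemma all_conn_of x y (c : dart D) : vof x = vof y ->
  (forall w, vof w = vof x -> connect (Rel (scut x y) a) c w) ->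
  forall u w, connect (Rel (scut x y) a) u w.
Proof.
move=> Hxy H u w.
have symR := sym_connect_sym (@Rel_sym _ (scut x y) a ainv).
have [u' Hu' Cu] := reach_v Hxy u.
have [w' Hw' Cw] := reach_v Hxy w.
apply: connect_trans Cu _; rewrite symR.
apply: connect_trans Cw _; rewrite symR.
apply: connect_trans (H _ Hw'); rewrite symR; exact: H.
Qed.

Lemma s_neq1 h : s (s h) != s h.
Proof. by apply: contra (s1 h) => /eqP/s_inj ->. Qed.

Lemma Rconn1 (q : {perm dart D}) u w : Rel q a u w -> connect (Rel q a) u w.
Proof. exact: connect1. Qed.

Lemma T1a h : rof h != rof (s h).
Proof.
apply/negP => /eqP Hr.
have Hv : vof h = vof (s h) by rewrite vof_s.
have Hxy : h != s h by rewrite eq_sym s1.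
have Hd := cut_disc Hv Hxy Hr.
have symR := sym_connect_sym (@Rel_sym _ (scut h (s h)) a ainv).
have R1 : connect (Rel (scut h (s h)) a) h (s (s h)).
  by apply: connect1; rewrite /Rel /= scutx eqxx.
have R2 : connect (Rel (scut h (s h)) a) (s (s h)) (s (s (s h))).
  apply: connect1; rewrite /Rel /= scutE ?eqxx //; first by rewrite s2.
  exact: s_neq1.
have R3 : connect (Rel (scut h (s h)) a) (s (s (s h))) h.
  apply: connect1; rewrite /Rel /= scutE ?s4 ?eqxx //; first by rewrite s3.
  exact: (s2 (s h)).
pose C := [set z | connect (Rel (scut h (s h)) a) (s h) z].
have hC : ~~ connect (Rel (scut h (s h)) a) (s h) h.
  apply/negP => Hh; apply: Hd; apply: (@all_conn_of _ _ (s h) Hv) => w /darts_at [->|->|->|->].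
  - exact Hh.
  - exact: connect0.
  - exact: connect_trans Hh R1.
  - exact: connect_trans (connect_trans Hh R1) R2.
have notv z : z \in C -> z != s h -> vof z != vof h.
  rewrite inE => Hz Hzs; apply/eqP => Hvz; case: (darts_at Hvz) => E; subst z.
  - by rewrite Hz in hC.
  - by rewrite eqxx in Hzs.
  - by move: hC; rewrite (connect_trans Hz _) // symR.
  - by move: hC; rewrite (connect_trans Hz R3).
have Heven : ~~ odd #|C|.
  apply: (@even_inv _ a) => [z|z|z _]; [exact: ainv| |exact: afix].
  rewrite !inE => Hz; apply: connect_trans Hz _; apply: connect1.
  by rewrite /Rel /= eqxx !orbT.
have Heven' : ~~ odd #|C :\ s h|.
  apply: (@even_inv _ (fun z => s (s z))) => [z|z|z _]; [exact: s4| |exact: s2].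
  rewrite !in_setD1 => /andP[Hzs Hz].
  have Hv1 := notv z Hz Hzs.
  have zx : z != h by apply: contra Hv1 => /eqP ->.
  have zy : z != s h by [].
  have Hv2 : vof (s z) != vof h by rewrite vof_s.
  have zx' : s z != h by apply: contra Hv2 => /eqP ->.
  have zy' : s z != s h by apply: contra Hv2 => /eqP ->; rewrite vof_s.
  apply/andP; split.
    by apply: contra Hv2 => /eqP E; rewrite -vof_s E vof_s.
  move: Hz; rewrite !inE => Hz; apply: connect_trans Hz _.
  apply: (@connect_trans _ _ (s z)).
    by apply: connect1; rewrite /Rel /= scutE // eqxx.
  by apply: connect1; rewrite /Rel /= scutE // eqxx.
have shC : s h \in C by rewrite inE connect0.
move: Heven; rewrite (cardsD1 (s h)) shC oddD /=.
by rewrite (negbTE Heven').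
Qed.

Lemma s3_neq2 g : s (s (s g)) != s (s g). Proof. exact: s1. Qed.
Lemma s1_neq2 g : s g != s (s g). Proof. by rewrite eq_sym s_neq1. Qed.

Lemma rof_iter_phi j h : rof (iter j (phi (D:=D)) h) = rof h.
Proof. by symmetry; apply/rofP; apply: fconnect_iter. Qed.

Lemma T1b g : rof g = rof (s (s g)) -> rof (s g) != rof (s (s (s g))).
Proof.
move=> Hr; apply/negP => /eqP Hb.
have Hv : vof g = vof (s (s g)) by rewrite !vof_s.
have Hxy : g != s (s g) by rewrite eq_sym s2.
have Hd := cut_disc Hv Hxy Hr.
have RA : connect (Rel (scut g (s (s g))) a) (s g) (s (s g)).
  by apply: connect1; rewrite /Rel /= scutE ?eqxx ?s1 ?s1_neq2.
have RB : connect (Rel (scut g (s (s g))) a) (s (s (s g))) g.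
  by apply: connect1; rewrite /Rel /= scutE ?s4 ?eqxx ?s3 ?s3_neq2.
have RC : connect (Rel (scut g (s (s g))) a) g (s (s (s g))).
  by apply: connect1; rewrite /Rel /= scutx eqxx.
have gC : ~~ connect (Rel (scut g (s (s g))) a) (s g) g.
  apply/negP => Hh; apply: Hd; apply: (@all_conn_of _ _ (s g) Hv) => w /darts_at [->|->|->|->].
  - exact Hh.
  - exact: connect0.
  - exact: RA.
  - exact: connect_trans Hh RC.
have Hit j : connect (Rel (scut g (s (s g))) a) (s g) (iter j (phi (D:=D)) (s g)).
  elim: j => [|j IH]; first exact: connect0.
  apply: connect_trans IH _; set z := iter j _ _.
  have Hz : rof z = rof (s g) by rewrite rof_iter_phi.
  have zg : z != g by apply/eqP => E; move: (T1a g); rewrite -Hz E eqxx.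
  have zg2 : z != s (s g) by apply/eqP => E; move: (T1a g); rewrite Hr -E Hz eqxx.
  apply: (@connect_trans _ _ (s z)).
    by apply: connect1; rewrite /Rel /= scutE // eqxx.
  by apply: connect1; rewrite /Rel /= /phi eqxx !orbT.
have Hf : fconnect (phi (D:=D)) (s g) (s (s (s g))) by apply/rofP.
have := Hit (findex (phi (D:=D)) (s g) (s (s (s g)))); rewrite iter_findex // => H3.
by move: gC; rewrite (connect_trans H3 RB).
Qed.

Definition irrb (v : vtx D) : bool :=
  [forall h, forall h', (vof h == v) ==> (vof h' == v) ==> (rof h == rof h') ==> (h == h')].

Lemma irrP v : reflect (irreducible v) (irrb v).
Proof.
apply: (iffP forallP) => [H h h' Hh Hh' Hr|H h].
  by have /forallP/(_ h') := H h; rewrite Hh Hh' Hr !eqxx /= => /eqP.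
apply/forallP => h'; apply/implyP => /eqP Hh; apply/implyP => /eqP Hh'.
by apply/implyP => /eqP Hr; apply/eqP; apply: H.
Qed.

Lemma red_pattern v : ~~ irrb v -> exists2 g, vof g = v & rof g = rof (s (s g)).
Proof.
move/forallPn => [h /forallPn [h']]; rewrite !negb_imply => /and4P[/eqP Hh /eqP Hh' /eqP Hr Hne].
have : vof h' = vof h by rewrite Hh Hh'.
case/darts_at => E; subst h'.
- by rewrite eqxx in Hne.
- by move: (T1a h); rewrite Hr eqxx.
- by exists h.
- by move: (T1a (s (s (s h)))); rewrite s4 Hr eqxx.
Qed.

Lemma pat_red g : rof g = rof (s (s g)) -> ~~ irrb (vof g).
Proof.
move=> Hg; apply/irrP => H.
have E := H g (s (s g)) erefl (etrans (vof_s (s g)) (vof_s g)) Hg.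
by move: (s2 g); rewrite -E eqxx.
Qed.

Definition Cg g := [set z | connect (Rel (scut g (s (s g))) a) (s g) z].

Definition partner (e : dart D) := if rof e == rof (s (s e)) then s (s (s e)) else s e.
Definition tau' (h : dart D) := let e := a h in if irrb (vof e) then s (s e) else partner e.
Definition Lr : rel (dart D) := [rel u w | (w == tau' u) || (w == a u)].
Definition samecell x y := forall g, rof g = rof (s (s g)) -> (x \in Cg g) = (y \in Cg g).

Section Cell.
Variable g : dart D.
Hypothesis Hg : rof g = rof (s (s g)).

Let R := Rel (scut g (s (s g))) a.
Let symR : connect_sym R := sym_connect_sym (@Rel_sym _ (scut g (s (s g))) a ainv).

Lemma K1 z : (a z \in Cg g) = (z \in Cg g).
Proof.
rewrite !inE; apply/idP/idP => H; apply: connect_trans H _; apply: connect1;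
  by rewrite /Rel /= ?ainv eqxx !orbT.
Qed.

Lemma K2 z : vof z != vof g -> (s z \in Cg g) = (z \in Cg g).
Proof.
move=> Hz.
have zg : z != g by apply: contra Hz => /eqP ->.
have zg2 : z != s (s g) by apply: contra Hz => /eqP ->; rewrite !vof_s.
have Rz : connect R z (s z) by apply: connect1; rewrite /R /Rel /= scutE // eqxx.
rewrite !inE; apply/idP/idP => H.
  by apply: connect_trans H _; rewrite symR.
exact: connect_trans H Rz.
Qed.

Lemma memC1 : s g \in Cg g. Proof. by rewrite inE connect0. Qed.
Lemma memC2 : s (s g) \in Cg g.
Proof. by rewrite inE; apply: connect1; rewrite /Rel /= scutE ?eqxx ?s1 ?s1_neq2. Qed.
Lemma memC0 : g \notin Cg g.
Proof.
have Hv : vof g = vof (s (s g)) by rewrite !vof_s.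
have Hxy : g != s (s g) by rewrite eq_sym s2.
have Hd := cut_disc Hv Hxy Hg.
have RC : connect R g (s (s (s g))).
  by apply: connect1; rewrite /R /Rel /= scutx eqxx.
rewrite inE; apply/negP => Hh; apply: Hd.
apply: (@all_conn_of _ _ (s g) Hv) => w /darts_at [->|->|->|->].
- exact Hh.
- exact: connect0.
- by move: memC2; rewrite inE.
- exact: connect_trans Hh RC.
Qed.
Lemma memC3 : s (s (s g)) \notin Cg g.
Proof.
apply: contra memC0; rewrite !inE => H; apply: connect_trans H _.
by apply: connect1; rewrite /Rel /= scutE ?s4 ?eqxx ?s3 ?s3_neq2.
Qed.

Lemma partner0 : partner g = s (s (s g)). Proof. by rewrite /partner Hg eqxx. Qed.
Lemma partner1 : partner (s g) = s (s g).
Proof. by rewrite /partner (negbTE (T1b Hg)). Qed.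
Lemma partner2 : partner (s (s g)) = s g.
Proof. by rewrite /partner !s4 -Hg eqxx. Qed.
Lemma partner3 : partner (s (s (s g))) = g.
Proof. by rewrite /partner !s4 eq_sym (negbTE (T1b Hg)). Qed.

Lemma partner_side e : vof e = vof g ->
  [/\ (partner e \in Cg g) = (e \in Cg g), partner e != e & vof (partner e) = vof g].
Proof.
have m0 := memC0; have m1 := memC1; have m2 := memC2; have m3 := memC3.
case/darts_at => ->.
- by rewrite partner0 (negbTE m0) (negbTE m3) s3 !vof_s.
- by rewrite partner1 m1 m2 eq_sym s1_neq2 !vof_s.
- by rewrite partner2 m1 m2 s1_neq2 !vof_s.
- by rewrite partner3 (negbTE m0) (negbTE m3) eq_sym s3.
Qed.

Lemma same_side e w : vof e = vof g -> vof w = vof g ->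
  (w \in Cg g) = (e \in Cg g) -> w = e \/ w = partner e.
Proof.
have m0 := negbTE memC0; have m1 := memC1; have m2 := memC2; have m3 := negbTE memC3.
case/darts_at => ->; case/darts_at => ->; rewrite ?m0 ?m1 ?m2 ?m3 // => _;
  rewrite ?partner0 ?partner1 ?partner2 ?partner3; by [left|right].
Qed.

Lemma side_tau w : vof (a w) != vof g -> (tau w \in Cg g) = (w \in Cg g).
Proof.
move=> H; rewrite /tau K2; last by rewrite vof_s.
by rewrite K2 // K1.
Qed.

Lemma tau_flip z : vof (a z) = vof g -> (tau z \in Cg g) = ~~ (z \in Cg g).
Proof.
have m0 := negbTE memC0; have m1 := memC1; have m2 := memC2; have m3 := negbTE memC3.
move=> H; rewrite -(K1 z) /tau; case/darts_at: H => ->;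
  by rewrite ?s4 ?m0 ?m1 ?m2 ?m3.
Qed.
End Cell.

Lemma K2n g (Hg : rof g = rof (s (s g))) e f : vof e != vof g -> vof f = vof e ->
  (f \in Cg g) = (e \in Cg g).
Proof.
move=> Hne.
have H1 : vof (s e) != vof g by rewrite vof_s.
have H2 : vof (s (s e)) != vof g by rewrite !vof_s.
case/darts_at => ->.
- by [].
- by rewrite (K2 Hne).
- by rewrite (K2 H1) (K2 Hne).
- by rewrite (K2 H2) (K2 H1) (K2 Hne).
Qed.

Lemma L_cell u w : Lr u w -> samecell u w.
Proof.
rewrite /Lr /= => /orP[/eqP->|/eqP->] g Hg; last by rewrite (K1 g).
rewrite /tau' -(K1 g u); set e := a u.
case: ifP => Hirr.
  have Hne : vof e != vof g.
    by apply/eqP => E; move: (pat_red Hg); rewrite -E Hirr.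
  by rewrite (K2n Hg Hne) // !vof_s.
case: (vof e =P vof g) => [E|/eqP E].
  by case: (partner_side Hg E).
rewrite (K2n Hg E) // /partner; case: ifP => _; rewrite !vof_s //.
Qed.

Lemma connL_cell x y : connect Lr x y -> samecell x y.
Proof.
move/connectP => [pth Hp ->]; elim: pth x Hp => [|z pth IH] x //= /andP[H1 H2] g Hg.
by rewrite (L_cell H1 Hg) (IH z H2 g Hg).
Qed.

Lemma path_irr x m : (forall k, k < m -> irrb (vof (a (iter k (tau (D:=D)) x)))) ->
  connect Lr x (iter m (tau (D:=D)) x).
Proof.
elim: m => [|m IH] H; first exact: connect0.
apply: connect_trans (IH _) _; first by move=> k Hk; apply: H; lia.
apply: connect1; rewrite /Lr /= /tau' (H m (ltnSn m)).
by rewrite /tau eqxx.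
Qed.

Lemma walk n x : samecell x (iter n (tau (D:=D)) x) -> connect Lr x (iter n (tau (D:=D)) x).
Proof.
elim/ltn_ind: n x => n IH x Hc.
case: (boolP [exists i : 'I_n, ~~ irrb (vof (a (iter i (tau (D:=D)) x)))]) => [Hex|Hno]; last first.
  apply: path_irr => k Hk; move: Hno; rewrite negb_exists => /forallP /(_ (Ordinal Hk)).
  by rewrite negbK.
have HP : exists i, (i < n) && ~~ irrb (vof (a (iter i (tau (D:=D)) x))).
  by case/existsP: Hex => i Hi; exists i; rewrite ltn_ord Hi.
case: (ex_minnP HP) => i /andP[Hin Hred] Hmin.
set z := iter i (tau (D:=D)) x.
have Cz : connect Lr x z.
  apply: path_irr => k Hk; apply/negPn/negP => Hk'.
  have := Hmin k; rewrite Hk' (ltn_trans Hk Hin) => /(_ isT); lia.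
have [g Hgv Hg] := red_pattern Hred.
have Sz := connL_cell Cz.
have Hflip := tau_flip Hg (esym Hgv).
have Qn : (i < n) && ((iter n (tau (D:=D)) x \in Cg g) == (z \in Cg g)).
  by rewrite Hin -(Hc g Hg) (Sz g Hg) eqxx.
have HQ : exists j, (i < j) && ((iter j (tau (D:=D)) x \in Cg g) == (z \in Cg g)).
  by exists n.
case: (ex_minnP HQ) => j /andP[Hij /eqP Hjz] Hjmin.
have Hjn : j <= n := Hjmin n Qn.
have Hj1 : i.+1 < j.
  rewrite ltn_neqAle Hij andbT; apply/eqP => E; move: Hjz; rewrite -E iterS -/z Hflip.
  by case: (z \in Cg g).
set w := iter j.-1 (tau (D:=D)) x.
have Ej : iter j (tau (D:=D)) x = tau w by rewrite /w -iterS prednK //; lia.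
have Hw : (w \in Cg g) != (z \in Cg g).
  apply/negP => /eqP Hw'; have := Hjmin j.-1; rewrite -/w Hw' eqxx andbT.
  have -> : i < j.-1 by lia.
  move=> /(_ isT); lia.
have Hwv : vof (a w) = vof g.
  apply/eqP; apply/negPn/negP => Hne; move: Hw; rewrite -(side_tau Hne) -Ej Hjz eqxx.
  by [].
have Hjv : vof (iter j (tau (D:=D)) x) = vof g by rewrite Ej /tau !vof_s.
have Hjm : (iter j (tau (D:=D)) x \in Cg g) = (a z \in Cg g) by rewrite (K1 g) Hjz.
have Hsd := same_side Hg (esym Hgv) Hjv Hjm.
have Lzj : Lr z (iter j (tau (D:=D)) x).
  by rewrite /Lr /= /tau' (negbTE Hred); case: Hsd => ->; rewrite eqxx ?orbT.
have Cj : connect Lr x (iter j (tau (D:=D)) x) := connect_trans Cz (connect1 Lzj).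
have Hlt : n - j < n by lia.
have := IH (n - j) Hlt (iter j (tau (D:=D)) x).
rewrite -iterD subnK // => IH'.
have Hs' : samecell (iter j (tau (D:=D)) x) (iter n (tau (D:=D)) x).
  by move=> g' Hg'; rewrite -(connL_cell Cj Hg') (Hc g' Hg').
exact: connect_trans Cj (IH' Hs').
Qed.

Lemma tau_inj : injective (tau (D:=D)).
Proof. by move=> x y; rewrite /tau => /s_inj/s_inj/perm_inj. Qed.

Lemma irr_linked e f : irrb (vof e) -> vof f = vof e -> connect Lr e f.
Proof.
move=> Hirr Hef.
have [h0 Hcov] := tau_cov.
have sc g : rof g = rof (s (s g)) -> (e \in Cg g) = (f \in Cg g).
  move=> Hg; have Hne : vof e != vof g.
    by apply/eqP => E; move: (pat_red Hg); rewrite -E Hirr.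
  by rewrite (K2n Hg Hne Hef).
have Hlink e' f' : (e' = e \/ e' = a e) -> (f' = f \/ f' = a f) ->
    fconnect (tau (D:=D)) h0 e' -> fconnect (tau (D:=D)) h0 f' -> connect Lr e f.
  move=> He' Hf' C1 C2.
  have C3 : fconnect (tau (D:=D)) e' f'.
    by apply: connect_trans C2; rewrite (fconnect_sym tau_inj).
  have Hsc : samecell e' (iter (findex (tau (D:=D)) e' f') (tau (D:=D)) e').
    rewrite iter_findex // => g Hg.
    case: He' => ->; case: Hf' => ->; rewrite ?(K1 g); exact: sc.
  have := walk Hsc; rewrite iter_findex // => C4.
  apply: (@connect_trans _ _ e').
    case: He' => ->; first exact: connect0.
    by apply: connect1; rewrite /Lr /= eqxx orbT.
  apply: connect_trans C4 _.
  case: Hf' => ->; first exact: connect0.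
  by apply: connect1; rewrite /Lr /= ainv eqxx orbT.
case: (Hcov e) => He; case: (Hcov f) => Hf.
- exact: (Hlink e f (or_introl erefl) (or_introl erefl)).
- exact: (Hlink e (a f) (or_introl erefl) (or_intror erefl)).
- exact: (Hlink (a e) f (or_intror erefl) (or_introl erefl)).
- exact: (Hlink (a e) (a f) (or_intror erefl) (or_intror erefl)).
Qed.
End Knot.

Local Open Scope ring_scope.

Section Main.
Variable D : diagram.
Hypothesis KD : knot_diagram D.

Local Notation s := (sigma D).
Local Notation a := (alpha D).
Local Notation vof := (@vof D).
Local Notation rof := (@rof D).

Lemma ver_irr (k : kcol) (ver : vtx D -> reg D -> Zk k) : is_version ver ->
  forall v, irreducible v ->
  exists2 c : Zk k, not_zero_divisor c & forall r, incident v r -> ver v r = c.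
Proof.
case: k ver => [n|] ver Hver v Hirr.
  by case: (Hver v) => H _; case: (H Hirr) => c [Hc1 Hc2]; exists c.
exists 1; first by move=> y; rewrite mul1r.
by move=> r Hr; apply: Hver => //; left.
Qed.

Lemma ver_red (k : kcol) (ver : vtx D -> reg D -> Zk k) : is_version ver ->
  forall v, ~ irreducible v -> forall r, incident v r -> ncorners v r = 1%N ->
  not_zero_divisor (ver v r).
Proof.
case: k ver => [n|] ver Hver v Hirr r Hinc Hn.
  by case: (Hver v) => _ H; apply: H.
by rewrite (Hver v r Hinc (or_intror Hn)) => y; rewrite mul1r.
Qed.

Lemma inc_iff g r : incident (vof g) r =
  (r \in [:: rof g; rof (s g); rof (s (s g)); rof (s (s (s g)))]).
Proof.
apply/existsP/idP => [[h /andP[/eqP Hv /eqP <-]]|].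
  by case: (darts_at KD Hv) => ->; rewrite !inE eqxx ?orbT.
rewrite !inE => /or4P[] /eqP ->.
- by exists g; rewrite !eqxx.
- by exists (s g); rewrite vof_s // !eqxx.
- by exists (s (s g)); rewrite !vof_s // !eqxx.
- by exists (s (s (s g))); rewrite !vof_s // !eqxx.
Qed.

Variables (k : kcol) (ver : vtx D -> reg D -> Zk k) (l : reg D -> Zk k).
Hypothesis Hver : is_version ver.
Hypothesis Hnull : null_pattern ver l.

Lemma sum_inc v (F : reg D -> Zk k) (lst : seq (reg D)) : uniq lst ->
  (forall r, incident v r = (r \in lst)) ->
  \sum_r (if incident v r then F r else 0) = \sum_(r <- lst) F r.
Proof.
move=> Hu Hi; rewrite -big_mkcond /= (big_uniq _ Hu).
by apply: eq_bigl => r; rewrite Hi.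
Qed.

Lemma irr_dist e : irrb (vof e) ->
  uniq [:: rof e; rof (s e); rof (s (s e)); rof (s (s (s e)))].
Proof.
move/irrP => H.
have Hn x y : vof x = vof e -> vof y = vof e -> x != y -> rof x != rof y.
  by move=> Hx Hy; apply: contra => /eqP Hr; apply/eqP; apply: H.
have V1 : vof (s e) = vof e by rewrite vof_s.
have V2 : vof (s (s e)) = vof e by rewrite !vof_s.
have V3 : vof (s (s (s e))) = vof e by rewrite !vof_s.
rewrite /= !inE !negb_or !andbT.
apply/and3P; split; [apply/and3P; split | apply/andP; split |]; apply: Hn => //.
- by rewrite eq_sym (s1 KD).
- by rewrite eq_sym (s2 KD).
- by rewrite eq_sym (s3 KD).
- by rewrite (s1_neq2 KD).
- by rewrite eq_sym (s2 KD).
- by rewrite eq_sym (s1 KD).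
Qed.

Lemma VE_irr e : irrb (vof e) ->
  l (rof e) + l (rof (s e)) + l (rof (s (s e))) + l (rof (s (s (s e)))) = 0.
Proof.
move=> Hirr.
have [c Hc Hac] := ver_irr Hver (elimT (irrP _) Hirr).
have := Hnull (vof e).
rewrite (eq_bigr (fun r => c * (if incident (vof e) r then l r else 0))); last first.
  move=> r _; rewrite /game_matrix; case: ifP => Hi; last by rewrite !mulr0 mul0r.
  by rewrite (Hac r Hi).
rewrite -mulr_sumr (sum_inc _ (irr_dist Hirr) (@inc_iff e)) => /Hc.
by rewrite !big_cons big_nil addr0 !addrA.
Qed.

Lemma VE_red g : rof g = rof (s (s g)) ->
  ver (vof g) (rof g) * l (rof g) + ver (vof g) (rof (s g)) * l (rof (s g))
    + ver (vof g) (rof (s (s (s g)))) * l (rof (s (s (s g)))) = 0 /\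
  not_zero_divisor (ver (vof g) (rof (s g))) /\
  not_zero_divisor (ver (vof g) (rof (s (s (s g))))).
Proof.
move=> Hg.
have d1 := T1a KD g.
have d2 : rof (s (s (s g))) != rof g.
  by have := T1a KD (s (s (s g))); rewrite (s4 KD) eq_sym.
have d3 := T1b KD Hg.
have Hu : uniq [:: rof g; rof (s g); rof (s (s (s g)))].
  by rewrite /= !inE !negb_or d1 eq_sym d2 d3.
have Hi r : incident (vof g) r = (r \in [:: rof g; rof (s g); rof (s (s (s g)))]).
  by rewrite inc_iff !inE -Hg; case: (r == rof g).
have Hred : ~ irreducible (vof g).
  by move/irrP; apply/negP; apply: (pat_red KD Hg).
have Hnc1 : ncorners (vof g) (rof (s g)) = 1%N.
  rewrite /ncorners (_ : [set h | _] = [set s g]) ?cards1 //.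
  apply/setP => h; rewrite !inE; apply/andP/eqP => [[/eqP Hv /eqP Hr]|->].
    case: (darts_at KD Hv) Hr => -> //.
    - by move=> E; move: d1; rewrite E eqxx.
    - by rewrite -Hg => E; move: d1; rewrite E eqxx.
    - by move=> E; move: d3; rewrite E eqxx.
  by rewrite vof_s // !eqxx.
have Hnc2 : ncorners (vof g) (rof (s (s (s g)))) = 1%N.
  rewrite /ncorners (_ : [set h | _] = [set s (s (s g))]) ?cards1 //.
  apply/setP => h; rewrite !inE; apply/andP/eqP => [[/eqP Hv /eqP Hr]|->].
    case: (darts_at KD Hv) Hr => -> //.
    - by move=> E; move: d2; rewrite E eqxx.
    - by move=> E; move: d3; rewrite E eqxx.
    - by rewrite -Hg => E; move: d2; rewrite E eqxx.
  by rewrite !vof_s // !eqxx.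
split; last split.
- have := Hnull (vof g); rewrite (eq_bigr (fun r => if incident (vof g) r then ver (vof g) r * l r else 0)); last first.
    by move=> r _; rewrite /game_matrix; case: ifP => _; rewrite ?mul0r.
  by rewrite (sum_inc _ Hu Hi) !big_cons big_nil addr0 addrA.
- by apply: (ver_red Hver Hred) => //; rewrite Hi !inE eqxx orbT.
- by apply: (ver_red Hver Hred) => //; rewrite Hi !inE eqxx !orbT.
Qed.

Definition sval h := l (rof h) + l (rof (a h)).

Lemma sval_a h : sval (a h) = sval h.
Proof. by rewrite /sval (ainv KD) addrC. Qed.

Lemma rof_a' h : rof (a h) = rof (s (s (s h))). Proof. exact: rof_a. Qed.

Lemma sval_partner e : ~~ irrb (vof e) -> sval (partner e) = sval e.
Proof.
move=> Hred; have [g Hgv Hg] := red_pattern KD Hred.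
have S4 := s4 KD.
case: (darts_at KD (esym Hgv)) => ->.
- by rewrite (partner0 Hg) /sval !rof_a' !S4 -Hg addrC.
- by rewrite (partner1 KD Hg) /sval !rof_a' !S4 -Hg addrC.
- by rewrite (partner2 KD Hg) /sval !rof_a' !S4 -Hg addrC.
- by rewrite (partner3 KD Hg) /sval !rof_a' !S4 -Hg addrC.
Qed.

Lemma sval_L u w : Lr u w -> sval u = 0 -> sval w = 0.
Proof.
rewrite /Lr /= => /orP[/eqP->|/eqP->]; last by rewrite sval_a.
rewrite /tau' -(sval_a u); set e := a u; case: ifP => Hirr.
  have := VE_irr Hirr; rewrite /sval (rof_a' e) (rof_a' (s (s e))) !(s4 KD) => H1 H2.
  set l0 := l (rof e) in H1 H2 *; set l1 := l (rof (s e)) in H1 H2 *.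
  set l2 := l (rof (s (s e))) in H1 H2 *; set l3 := l (rof (s (s (s e)))) in H1 H2 *.
  rewrite (_ : l2 + l1 = (l0 + l1 + l2 + l3) - (l0 + l3)); first by rewrite H1 H2 subr0.
  ring.
by rewrite sval_partner // Hirr.
Qed.

Lemma sval_conn (u w : dart D) : connect (@Lr D) u w -> sval u = 0 -> sval w = 0.
Proof.
move/connectP => [pth Hp ->]; elim: pth u Hp => [|z pth IH] u //= /andP[H1 H2] Hu.
exact: IH H2 (sval_L H1 Hu).
Qed.

Definition good (v : vtx D) := forall h, vof h = v -> l (rof h) = 0.

Lemma edge_good h : l (rof h) = 0 -> l (rof (a h)) = 0 -> good (vof h).
Proof.
move=> H0 H3; rewrite rof_a' in H3.
case: (boolP (irrb (vof h))) => Hirr.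
  have Z f : vof f = vof h -> sval f = 0.
    move=> Hf; apply: (sval_conn (irr_linked KD Hirr Hf)).
    by rewrite /sval H0 rof_a' H3 addr0.
  have H1 : l (rof (s h)) = 0.
    by have := Z (s h) (vof_s KD h); rewrite /sval rof_a' (s4 KD) H0 addr0.
  have H2 : l (rof (s (s h))) = 0.
    have := Z (s (s h)) (etrans (vof_s KD _) (vof_s KD h)).
    by rewrite /sval rof_a' (s4 KD) H1 addr0.
  by move=> f /(darts_at KD) [] ->.
have [g Hgv Hg] := red_pattern KD Hirr.
have [VE [N1 N2]] := VE_red Hg.
have S4 := s4 KD.
have Z0 : l (rof g) = 0 /\ l (rof (s g)) = 0 /\ l (rof (s (s (s g)))) = 0.
  have E1 : l (rof g) = 0 -> l (rof (s g)) = 0 -> l (rof (s (s (s g)))) = 0.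
    by move=> A B; move: VE; rewrite A B !mulr0 !add0r => /N2.
  have E2 : l (rof g) = 0 -> l (rof (s (s (s g)))) = 0 -> l (rof (s g)) = 0.
    by move=> A B; move: VE; rewrite A B !mulr0 addr0 add0r => /N1.
  case: (darts_at KD (esym Hgv)) H0 H3 => -> H0 H3; rewrite ?S4 in H3.
  - by split=> //; split=> //; exact: E2.
  - by split=> //; split=> //; exact: E1.
  - by rewrite -Hg in H0; split=> //; split=> //; exact: E1.
  - by rewrite -Hg in H3; split=> //; split=> //; exact: E2.
case: Z0 => A [B C].
rewrite -Hgv => f /(darts_at KD) [] -> //; by rewrite -Hg.
Qed.

Lemma all_good h : good (vof h) -> forall x, good (vof x).
Proof.
move=> Hh x; have /connectP[pth Hp ->] := connR KD h x.
elim: pth h Hp Hh => [|z pth IH] h //= /andP[H1 H2] Hh.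
apply: (IH z H2); move: H1; rewrite /Rel /= => /orP[/orP[/eqP->|/eqP E]|/eqP->].
- by rewrite vof_s.
- by rewrite E vof_s in Hh.
- apply: edge_good.
    by rewrite rof_a'; apply: Hh; rewrite !vof_s.
  by rewrite (ainv KD); apply: Hh.
Qed.
End Main.

Theorem main_thm (D : diagram) (k : kcol)
  (a : vtx D -> reg D -> Zk k) (l : reg D -> Zk k) (r1 r2 : reg D) :
  knot_diagram D -> valid_k k -> is_version a ->
  null_pattern a l -> adjacent r1 r2 -> l r1 = 0 -> l r2 = 0 ->
  forall r, l r = 0.
Proof.
move=> KD _ Hver Hnull [h [H1 H2]] Z1 Z2 r.
have Hg := @edge_good D KD k a l Hver Hnull h (etrans (congr1 l H1) Z1) (etrans (congr1 l H2) Z2).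
have [h' <-] := rsurj KD r.
exact: (@all_good D KD k a l Hver Hnull h Hg h' h' erefl).
Qed.


Theorem mainTheorem6 (D : diagram) (k : kcol)
  (a : vtx D -> reg D -> Zk k) (l : reg D -> Zk k) (r1 r2 : reg D) :
  knot_diagram D -> valid_k k -> is_version a ->
  null_pattern a l -> adjacent r1 r2 -> l r1 = 0 -> l r2 = 0 ->
  forall r, l r = 0.
Proof. exact: main_thm. Qed.
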